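(* Let $T\colon \mathbb{N}\to\mathbb{N}$ be given by $T(n)=n/2$ for even $n$ and $T(n)=(3n+1)/2$ for odd $n$, with $k$-th iterate $T^{(k)}$. For each positive integer $k$ and each $r\in\{0,\ldots,2^k-1\}$ let $C_{k,r}\in\mathbb{Q}[X]$ denote the unique polynomial of degree at most one with $C_{k,r}(n)=T^{(k)}(n)$ for all positive integers $n\equiv r\pmod{2^k}$. Then for all positive integers $k,l$ and every $r\in\{0,\ldots,2^{k+l}-1\}$, writing $r'=r \bmod 2^l$ and $s=C_{l,r'}(r)\bmod 2^k$, one has the polynomial identity $$C_{k+l,r}(X)=C_{k,s}\bigl(C_{l,r'}(X)\bigr).$$
   Context: Here $a \bmod m$ denotes the least nonnegative residue of $a$ modulo $m$; note $C_{l,r'}(r)=T^{(l)}(r)$ is an integer (for $r=0$ interpret via the polynomial value, which is $0$). *)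

(* Defs.v *)
From mathcomp Require Import all_boot all_order all_algebra.
Set Implicit Arguments. Unset Strict Implicit. Unset Printing Implicit Defensive.
Import Order.TTheory GRing.Theory Num.Theory.
Local Open Scope ring_scope.

Definition T (n : nat) : nat :=
  if odd n then ((3 * n + 1)./2)%N else n./2.

(* C k r is "the" polynomial C_{k,r}: degree at most one (size <= 2) and
   C_{k,r}(n) = T^(k)(n) for every positive n = r mod 2^k.  A family C
   satisfies this specification on all k > 0, r < 2^k. *)
Definition Cspec (C : nat -> nat -> {poly rat}) : Prop :=
  forall (k r : nat), (0 < k)%N -> (r < 2 ^ k)%N ->
    (size (C k r) <= 2)%N /\
    forall n : nat, (0 < n)%N -> n = r %[mod 2 ^ k] ->
      (C k r).[n%:R] = (iter k T n)%:R.

(* Least nonnegative residue of the rational value C_{l,r'}(r) modulo 2^k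
   (that value is an integer; floor is the identity on it). *)
Definition resid (x : rat) (k : nat) : nat :=
  absz (Num.floor x %% (2 ^ k)%:Z)%Z.

(* Main.v *)
Require Import Defs.
From mathcomp Require Import all_boot all_order all_algebra.
Import Order.TTheory GRing.Theory Num.Theory.
From mathcomp Require Import ring zify.

Lemma T_shift n M : T (n + 2 * M) = (T n + 3 ^ odd n * M)%N.
Proof.
rewrite /T oddD mul2n odd_double addbF.
case: (odd n).
  have -> : (3 * (n + M.*2) + 1 = (3 * n + 1) + (3 * M).*2)%N by rewrite -!mul2n; lia.
  by rewrite halfD odd_double andbF add0n doubleK expn1.
by rewrite halfD odd_double andbF add0n doubleK expn0 mul1n.
Qed.

Lemma iterT_shift j n : exists a : nat, forall m,
  (iter j T (n + 2 ^ j * m) = iter j T n + a * m)%N.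
Proof.
elim: j n => [|j IH] n.
  by exists 1%N => m; rewrite /= expn0 !mul1n.
have [a Ha] := IH (T n).
exists (a * 3 ^ odd n)%N => m.
rewrite !iterSr expnS -mulnA T_shift mulnCA Ha.
by rewrite mulnA.
Qed.

Lemma T_pos n : (0 < n)%N -> (0 < T n)%N.
Proof.
rewrite /T; case: n => // n _; case: ifP => ho; rewrite half_gt0; first lia.
by case: n ho.
Qed.

Lemma iterT_pos j n : (0 < n)%N -> (0 < iter j T n)%N.
Proof. by move=> h; elim: j => //= j IH; apply: T_pos. Qed.

Fixpoint Acoef (j n : nat) : nat :=
  if j is j'.+1 then (Acoef j' (T n) * 3 ^ odd n)%N else 1%N.

Lemma iterT_shiftA j n m :
  (iter j T (n + 2 ^ j * m) = iter j T n + Acoef j n * m)%N.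
Proof.
elim: j n m => [|j IH] n m; first by rewrite /= expn0 !mul1n.
by rewrite !iterSr expnS -mulnA T_shift mulnCA IH /= mulnA.
Qed.

Lemma mod_decomp n r d : (r < d)%N -> n = r %[mod d] -> n = (r + d * (n %/ d))%N.
Proof.
move=> hr e; rewrite {1}(divn_eq n d) e modn_small //; lia.
Qed.

Arguments mod_decomp [n r d].
Local Open Scope ring_scope.

Lemma hornE2 (p : {poly rat}) x : (size p <= 2)%N -> p.[x] = p`_0 + p`_1 * x.
Proof.
move=> hs; rewrite (horner_coef_wide x hs) !big_ord_recr big_ord0 /=.
by rewrite add0r expr0 mulr1 expr1.
Qed.

Lemma poly_eq2 (p q : {poly rat}) x y : (size p <= 2)%N -> (size q <= 2)%N ->
  x != y -> p.[x] = q.[x] -> p.[y] = q.[y] -> p = q.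
Proof.
move=> hp hq hxy; rewrite !hornE2 // => e1 e2.
have h1 : p`_1 = q`_1.
  have : (p`_1 - q`_1) * (x - y) = 0.
    have -> : (p`_1 - q`_1) * (x - y) = (p`_0 + p`_1 * x) - (p`_0 + p`_1 * y)
        - ((q`_0 + q`_1 * x) - (q`_0 + q`_1 * y)) by ring.
    by rewrite e1 e2; ring.
  by move/eqP; rewrite mulf_eq0 !subr_eq0 (negbTE hxy) orbF => /eqP.
have h0 : p`_0 = q`_0 by move: e1; rewrite h1 => /addIr.
apply/polyP => i; case: i => [|[|i]] //.
by rewrite !nth_default // (leq_trans _ (isT : (2 <= i.+2)%N)).
Qed.

Lemma hornD (p : {poly rat}) x y : (size p <= 2)%N ->
  p.[x] - p.[y] = p`_1 * (x - y).
Proof. by move=> h; rewrite !hornE2 //; ring. Qed.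


Definition Cex (k r : nat) : {poly rat} :=
  (iter k T r)%:R%:P + ((Acoef k r)%:R / (2 ^ k)%:R) *: ('X - (r%:R)%:P).

Lemma Cex_spec : Cspec Cex.
Proof.
move=> k r hk hr; split.
  rewrite /Cex (leq_trans (size_polyD _ _)) // geq_max (leq_trans (size_polyC_leq1 _)) //=.
  by rewrite (leq_trans (size_scale_leq _ _)) // size_XsubC.
move=> n hn e.
rewrite (mod_decomp hr e) iterT_shiftA /Cex hornerD hornerC hornerZ hornerXsubC.
rewrite natrD addrAC subrr add0r natrD natrM natrM.
have h2 : (2 ^ k)%:R != 0 :> rat by rewrite pnatr_eq0 expn_eq0.
by field.
Qed.

Theorem mainTheorem2 :
  (exists C : nat -> nat -> {poly rat}, Cspec C) /\
  forall C : nat -> nat -> {poly rat}, Cspec C ->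
  forall (k l r : nat), (0 < k)%N -> (0 < l)%N -> (r < 2 ^ (k + l))%N ->
    let r' := (r %% 2 ^ l)%N in
    let s := resid (C l r').[r%:R] k in
    C (k + l)%N r = (C k s) \Po (C l r').
Proof.
split; first by exists Cex; exact: Cex_spec.
move=> C HC k l r hk hl hr r' s.
have hl2 : (0 < 2 ^ l)%N by rewrite expn_gt0.
have hkl2 : (0 < 2 ^ (k + l))%N by rewrite expn_gt0.
have hr' : (r' < 2 ^ l)%N by rewrite ltn_pmod.
have [hsp Hp] := HC l r' hl hr'.
have Pm : forall m : nat, (C l r').[(r' + 2 ^ l * m.+1)%N%:R]
    = (iter l T r' + Acoef l r' * m.+1)%N%:R.
  move=> m; rewrite -iterT_shiftA; apply: Hp.
    by rewrite addn_gt0 muln_gt0 hl2 orbT.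
  by rewrite addnC mulnC modnMDl modn_mod.
have slope : (C l r')`_1 * (2 ^ l)%N%:R = (Acoef l r')%:R.
  have := hornD _ ((r' + 2 ^ l * 2)%N%:R) ((r' + 2 ^ l * 1)%N%:R) hsp.
  rewrite !Pm !natrD !natrM.
  set a := (iter l T r')%:R; set A := (Acoef l r')%:R; set c := (2 ^ l)%N%:R.
  move=> H.
  have E1 : a + A * 2%:R - (a + A * 1%:R) = A by ring.
  have E2 : (r'%:R + c * 2%:R - (r'%:R + c * 1%:R)) = c :> rat by ring.
  by rewrite E1 E2 in H.
set p := C l r' in hsp Hp Pm slope *.
have key : forall m : nat, let n := (r + 2 ^ (k + l) * m.+1)%N in
    p.[n%:R] = (iter l T n)%:R /\ s = (iter l T n %% 2 ^ k)%N.
  move=> m n.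
  have hn : (0 < n)%N by rewrite /n addn_gt0 muln_gt0 hkl2 orbT.
  have pn : p.[n%:R] = (iter l T n)%:R.
    apply: Hp => //.
    rewrite /n /r' modn_mod expnD (mulnC (2 ^ k)%N) -mulnA addnC mulnC.
    by rewrite modnMDl.
  split => //.
  have pr : p.[r%:R] = ((iter l T n)%:Z - (Acoef l r' * 2 ^ k * m.+1)%N%:Z)%:~R.
    have := hornD _ (n%:R) (r%:R) hsp.
    move=> H; rewrite rmorphB /= !pmulrn.
    have E : n%:R - r%:R = (2 ^ k)%N%:R * (2 ^ l)%N%:R * (m.+1)%:R :> rat.
      by rewrite /n natrD addrAC subrr add0r expnD !natrM.
    have H2 : p.[r%:R] = p.[n%:R] - p`_1 * (n%:R - r%:R) by rewrite -H; ring.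
    have H3 : p`_1 * ((2 ^ k)%N%:R * (2 ^ l)%N%:R * (m.+1)%:R) =
       (Acoef l r')%:R * (2 ^ k)%N%:R * (m.+1)%:R by rewrite -slope; ring.
    by rewrite H2 E H3 pn -!pmulrn !natrM.
  rewrite /s /resid pr intrKfloor.
  have -> : ((iter l T n)%:Z - (Acoef l r' * 2 ^ k * m.+1)%N%:Z =
     (- (Acoef l r' * m.+1)%N%:Z) * (2 ^ k)%N%:Z + (iter l T n)%:Z)%R.
    by rewrite !PoszM; ring.
  by rewrite modzMDl modz_nat.
have hs : (s < 2 ^ k)%N by have [_ ->] := key 0%N; rewrite ltn_pmod // expn_gt0.
have [hqs Hq] := HC k s hk hs.
have [hPs HP] := HC (k + l)%N r (ltn_addr l hk) hr.
have ev : forall m : nat, let n := (r + 2 ^ (k + l) * m.+1)%N in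
    (C (k + l)%N r).[n%:R] = (C k s \Po p).[n%:R].
  move=> m n; have [pn sE] := key m.
  have hn : (0 < n)%N by rewrite /n addn_gt0 muln_gt0 hkl2 orbT.
  rewrite horner_comp pn Hq; first last.
  - by rewrite sE modn_mod.
  - exact: iterT_pos.
  rewrite HP // ?iterD //.
  by rewrite /n addnC mulnC modnMDl.
apply: (poly_eq2 _ _ _ _ hPs _ _ (ev 0%N) (ev 1%N)).
  rewrite (leq_trans (size_comp_poly_leq _ _)) //.
  move: hqs hsp; case: (size (C k s)) => [|[|[|?]]] //; case: (size p) => [|[|[|?]]] //.
by rewrite eqr_nat; lia.
Qed.
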